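(* Let $n>1$, $m\ge1$, let $v\in Z_{n,m}$, let $P$ be a pivot path of $v$ (to $0$), and let $I$ be a $P$-interval. Then for all $i,j$ with $[i,i+1]\subseteq I$ and $[j,j+1]\subseteq I$, all steps of $P$ that are shifts at $i$ and all steps of $P$ that are shifts at $j$ are in the same direction.
   Context: Elements of $\mathbb{Z}_n$ are identified with representatives in $\{0,\dots,n-1\}$. $Z_{n,m}$ has vertices $u=(u_0,\dots,u_{m+1})\in\mathbb{Z}_n\times\{-1,0,1\}^m\times\mathbb{Z}_n$ with $\sum u_i\equiv0\pmod n$. A step from $v$ to $u$ is a left shift at $i$ ($0\le i\le m$) if $u_j=v_j$ for $j\notin\{i,i+1\}$, $u_i=v_i+1$, $u_{i+1}=v_{i+1}-1$, and a right shift at $i$ if $u_i=v_i-1$, $u_{i+1}=v_{i+1}+1$ (arithmetic in coordinates $0,m+1$ in $\mathbb{Z}_n$); vertices are adjacent iff related by such a shift. For a path $P$ from $v$ to the all-zero vertex $0$: $0\le p\le m$ is an inner wall of $P$ if no step of $P$ is a shift at $p$; $-1$ is a wall if no step is a left shift at $0$; $m+1$ is a wall if no step is a right shift at $m$. A $p$-pivot path of $v$ is a shortest path from $v$ to $0$ among those having $p$ as a wall; a pivot path is a $p$-pivot path for some $p$. If $p_1<\dots<p_t$ are the inner walls of a pivot path $P$ and $p_0=-1$, $p_{t+1}=m+1$, the $P$-intervals are the integer intervals $[p_k+1,p_{k+1}]$, $0\le k\le t$. *)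

(* Defs.v *)
From mathcomp Require Import all_boot all_order all_algebra.
Set Implicit Arguments. Unset Strict Implicit. Unset Printing Implicit Defensive.
Import Order.TTheory GRing.Theory Num.Theory.
Local Open Scope ring_scope.

(* A vertex of Z_{n,m} is a sequence u = [u_0; ...; u_{m+1}] of integers with
   u_0, u_{m+1} in {0,...,n-1} (representatives of Z_n), u_k in {-1,0,1} for
   1 <= k <= m, and sum u_k = 0 mod n. *)
Definition coord (u : seq int) (k : nat) : int := nth 0 u k.

Definition is_vertex (n m : nat) (u : seq int) : Prop :=
  [/\ size u = m.+2,
      0 <= coord u 0 < n%:Z,
      0 <= coord u m.+1 < n%:Z,
      (forall k : nat, (1 <= k <= m)%N -> coord u k \in [:: -1; 0; 1])
    & (n%:Z %| \sum_(x <- u) x)%Z].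

Definition zero_vertex (m : nat) : seq int := nseq m.+2 0.

Definition addc (n m k : nat) (d x : int) : int :=
  if (k == 0)%N || (k == m.+1)%N then ((x + d) %% n%:Z)%Z else x + d.

(* [shift n m dir i v u]: the step from v to u is a left shift at i
   (dir = true) or a right shift at i (dir = false), 0 <= i <= m. *)
Definition shift (n m : nat) (dir : bool) (i : nat) (v u : seq int) : Prop :=
  let s : int := if dir then 1 else -1 in
  [/\ (i <= m)%N,
      forall j : nat, j != i -> j != i.+1 -> coord u j = coord v j,
      coord u i = addc n m i s (coord v i)
    & coord u i.+1 = addc n m i.+1 (- s) (coord v i.+1)].

(* A path is the list of its vertices x_0, ..., x_k; its steps are the pairs
   (x_a, x_{a+1}), a < k; its length is k = size P - 1. *)
Definition is_path_to0 (n m : nat) (v : seq int) (P : seq (seq int)) : Prop :=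
  [/\ (0 < size P)%N,
      nth [::] P 0 = v,
      last v P = zero_vertex m,
      (forall a : nat, (a < size P)%N -> is_vertex n m (nth [::] P a))
    & forall a : nat, (a.+1 < size P)%N ->
        exists dir i, shift n m dir i (nth [::] P a) (nth [::] P a.+1)].

Definition step_shift (n m : nat) (P : seq (seq int)) (a : nat) (dir : bool) (i : nat)
  : Prop :=
  (a.+1 < size P)%N /\ shift n m dir i (nth [::] P a) (nth [::] P a.+1).

Definition inner_wall (n m : nat) (P : seq (seq int)) (p : nat) : Prop :=
  (p <= m)%N /\ forall a dir, ~ step_shift n m P a dir p.

Definition is_wall (n m : nat) (P : seq (seq int)) (p : int) : Prop :=
  if p == -1 then forall a, ~ step_shift n m P a true 0
  else if p == (m.+1)%:Z then forall a, ~ step_shift n m P a false m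
  else exists q : nat, p = q%:Z /\ inner_wall n m P q.

Definition pivot_path_at (n m : nat) (v : seq int) (P : seq (seq int)) (p : int)
  : Prop :=
  [/\ (-1 <= p <= (m.+1)%:Z)%R, is_path_to0 n m v P, is_wall n m P p &
      forall Q, is_path_to0 n m v Q -> is_wall n m Q p -> (size P <= size Q)%N].

Definition pivot_path (n m : nat) (v : seq int) (P : seq (seq int)) : Prop :=
  exists p : int, pivot_path_at n m v P p.

(* [lo, hi] is a P-interval: lo = p_k + 1, hi = p_{k+1} for consecutive
   elements p_k < p_{k+1} of the list -1, (inner walls), m+1. *)
Definition P_interval (n m : nat) (P : seq (seq int)) (lo hi : int) : Prop :=
  exists a b : int,
    [/\ lo = a + 1 /\ hi = b,
        a = -1 \/ exists q : nat, a = q%:Z /\ inner_wall n m P q,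
        b = (m.+1)%:Z \/ exists q : nat, b = q%:Z /\ inner_wall n m P q,
        a < b
      & forall q : nat, inner_wall n m P q -> ~ (a < q%:Z < b)].

(* Main.v *)
Require Import Defs.
From mathcomp Require Import all_boot all_order all_algebra.
From mathcomp Require Import zify.
Import Order.TTheory GRing.Theory Num.Theory.
Local Open Scope ring_scope.
Set Implicit Arguments. Unset Strict Implicit. Unset Printing Implicit Defensive.
Local Notation crd := Defs.coord.
Local Notation shf := Defs.shift.

Lemma mem3 (x : int) : (x \in [:: -1; 0; 1]) = (-1 <= x <= 1).
Proof. rewrite !inE; lia. Qed.

Lemma addc_dvd n m k d x : (n%:Z %| addc n m k d x - (x + d))%Z.
Proof.
rewrite /addc; case: ifP => _; last by rewrite subrr dvdz0.
apply/dvdzP; exists (- divz (x + d) n%:Z); lia.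
Qed.

Lemma addc_inner n m k d x : (k != 0)%N -> (k != m.+1)%N -> addc n m k d x = x + d.
Proof. by rewrite /addc => /negbTE -> /negbTE ->. Qed.

Lemma addc_range n m k d x : (0 < n)%N -> ((k == 0) || (k == m.+1))%N ->
  0 <= addc n m k d x < n%:Z.
Proof. by rewrite /addc => Hn ->; lia. Qed.

Lemma mod_shift_neq (x s : int) n : (1 < n)%N -> 0 <= x < n%:Z ->
  (s = 1 \/ s = -1) -> ((x + s) %% n%:Z)%Z <> x.
Proof.
move=> Hn Hx Hs E.
have E2 : x + s = divz (x + s) n%:Z * n%:Z + x by lia.
set q := divz (x + s) n%:Z in E2.
have [h|[h|h]] : (q <= -1) \/ (q = 0) \/ (1 <= q) by lia.
- nia.
- rewrite h in E2; lia.
- nia.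
Qed.

Lemma shift_changes n m d i x y : (1 < n)%N -> is_vertex n m x ->
  shf n m d i x y -> crd y i != crd x i.
Proof.
move=> Hn [_ H0 _ _ _] [Hi _ -> _].
have [->|i0] := eqVneq i 0%N.
  rewrite /addc /=; apply/eqP; apply: mod_shift_neq => //; by case: d; [left|right].
rewrite addc_inner //; last by apply/eqP; lia.
by case: d; apply/eqP; lia.
Qed.

Lemma shift_uniq n m d i d' i' x y : (1 < n)%N -> (1 <= m)%N -> is_vertex n m x ->
  shf n m d i x y -> shf n m d' i' x y -> d = d' /\ i = i'.
Proof.
move=> Hn Hm Hx S1 S2.
have C1 := shift_changes Hn Hx S1.
have C2 := shift_changes Hn Hx S2.
have Eii : i = i'.
  case: S1 => _ O1 _ _; case: S2 => _ O2 _ _.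
  have A : (i == i') || (i == i'.+1).
    apply/negPn/negP; rewrite negb_or => /andP[a b]. by rewrite O2 ?eqxx in C1.
  have B : (i' == i) || (i' == i.+1).
    apply/negPn/negP; rewrite negb_or => /andP[a b]. by rewrite O1 ?eqxx in C2.
  lia.
subst i'; split => //.
case: S1 => Hi _ Hc1 Hc1'; case: S2 => _ _ Hc2 Hc2'.
have [i0|i0] := eqVneq i 0%N.
  subst i; have h2 : (1 != m.+1)%N by lia.
  move: Hc1' Hc2'; rewrite !(addc_inner _ _ _ _ h2) //.
  move=> -> E; clear Hc1 Hc2; move: E; case: d; case: d' => //; lia.
have h1 : (i != m.+1)%N by apply/eqP; lia.
move: Hc1 Hc2; rewrite !(addc_inner _ _ _ i0 h1).
move=> -> E; clear Hc1' Hc2'; move: E; case: d; case: d' => //; lia.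
Qed.

Lemma addc_dvd' n m k d x : (n%:Z %| addc n m k d x - x - d)%Z.
Proof. by rewrite -addrA -opprD addc_dvd. Qed.

Definition flow (S : seq (bool * nat)) (k : nat) : int :=
  (count_mem (true, k) S)%:Z - (count_mem (false, k) S)%:Z.
Definition cnt (S : seq (bool * nat)) (k : nat) : nat :=
  (count_mem (true, k) S + count_mem (false, k) S)%N.

Lemma flow_cons s S k : flow (s :: S) k = flow [:: s] k + flow S k.
Proof. rewrite /flow /= ; lia. Qed.

Lemma flow1 d i k : flow [:: (d, i)] k = if k == i then (if d then 1 else -1) else 0.
Proof.
rewrite /flow /= !xpair_eqE /= (eq_sym i k).
by case: d; case: (k == i).
Qed.

Lemma step_flow n m d i x y : shf n m d i x y ->
  [/\ forall k, (1 <= k <= m)%N ->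
        crd y k = crd x k + flow [:: (d, i)] k - flow [:: (d, i)] k.-1,
      (n%:Z %| crd y 0 - crd x 0 - flow [:: (d, i)] 0)%Z &
      (n%:Z %| crd y m.+1 - crd x m.+1 + flow [:: (d, i)] m)%Z].
Proof.
case=> Hi Ho Hc Hc1; rewrite !flow1; split.
- move=> k Hk; rewrite !flow1.
  have [ki|ki] := eqVneq k i.
    subst k; rewrite Hc addc_inner; try (apply/eqP; lia).
    rewrite (_ : (i.-1 == i) = false); last by lia.
    case: d {Hc Hc1}; lia.
  have [ki1|ki1] := eqVneq k i.+1.
    subst k; rewrite Hc1 addc_inner; try (apply/eqP; lia).
    rewrite /= eqxx.
    case: d {Hc Hc1}; lia.
  rewrite Ho // ?(negbTE ki) (_ : (k.-1 == i) = false); last by lia.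
  lia.
- have [i0|i0] := eqVneq i 0%N.
    by subst i; rewrite Hc /=; apply: addc_dvd'.
  rewrite Ho //; last by rewrite eq_sym.
  by rewrite !subrr dvdz0.
- have [im|im] := eqVneq i m.
    subst i; rewrite Hc1 ?eqxx /=.
    by have := addc_dvd' n m m.+1 (- (if d then 1 else -1)) (crd x m.+1); rewrite opprK.
  rewrite Ho //; try (apply/eqP; lia).
  by rewrite addr0 subrr dvdz0.
Qed.

Lemma cons_path n m : forall S x P',
  size S = size P' ->
  (forall a, (a < size S)%N -> shf n m (nth (true, 0%N) S a).1 (nth (true, 0%N) S a).2
                                    (nth [::] (x :: P') a) (nth [::] (x :: P') a.+1)) ->
  [/\ forall k, (1 <= k <= m)%N -> crd (last x P') k = crd x k + flow S k - flow S k.-1,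
      (n%:Z %| crd (last x P') 0 - crd x 0 - flow S 0)%Z &
      (n%:Z %| crd (last x P') m.+1 - crd x m.+1 + flow S m)%Z].
Proof.
elim=> [|[d i] S IH] x P'.
  have F0 k : flow [::] k = 0 by rewrite /flow /= subrr.
  case: P' => // _ _; split => [k _||]; rewrite !F0 ?subrr ?subr0 ?addr0 ?dvdz0 //.
case: P' => [//|x1 P''] [Hs] Hst; rewrite last_cons.
have H0 : shf n m d i x x1 := Hst 0%N isT.
have [A1 B1 C1] := step_flow H0.
have [A2 B2 C2] := IH x1 P'' Hs (fun a Ha => Hst a.+1 Ha).
split.
- move=> k Hk; rewrite A2 // A1 // !(flow_cons (d, i) S); lia.
- have := rpredD B1 B2; rewrite (flow_cons (d, i) S); congr (_ %| _)%Z; lia.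
- have := rpredD C1 C2; rewrite (flow_cons (d, i) S); congr (_ %| _)%Z; lia.
Qed.

Lemma extract n m : forall P : seq (seq int),
  (forall a, (a.+1 < size P)%N -> exists d i, shf n m d i (nth [::] P a) (nth [::] P a.+1)) ->
  exists S : seq (bool * nat), size S = (size P).-1 /\
    forall a, (a < size S)%N -> shf n m (nth (true, 0%N) S a).1 (nth (true, 0%N) S a).2
                                    (nth [::] P a) (nth [::] P a.+1).
Proof.
elim=> [|x P IH] H; first by exists [::].
case: P IH H => [|y P] IH H; first by exists [::].
have [S [HS1 HS2]] := IH (fun a Ha => H a.+1 Ha).
have [d [i Hdi]] := H 0%N isT.
exists ((d, i) :: S); split; first by rewrite /= HS1.
by case=> [|a] Ha //=; apply: HS2.
Qed.

Definition consf (n m : nat) (v : seq int) (f : nat -> int) : Prop :=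
  [/\ forall k, (1 <= k <= m)%N -> crd v k + f k - f k.-1 = 0,
      (n%:Z %| crd v 0%N + f 0%N)%Z & (n%:Z %| crd v m.+1 - f m)%Z].

Definition absum (m : nat) (f : nat -> int) : nat := (\sum_(k < m.+1) `|f k|)%N.

Definition shiftv (n m : nat) (d : bool) (k : nat) (v : seq int) : seq int :=
  let s : int := if d then 1 else -1 in
  set_nth 0 (set_nth 0 v k (addc n m k s (crd v k))) k.+1 (addc n m k.+1 (- s) (crd v k.+1)).

Lemma sum_set_nth (u : seq int) k y : (k < size u)%N ->
  \sum_(x <- set_nth 0 u k y) x = \sum_(x <- u) x - nth 0 u k + y.
Proof.
elim: u k => [|x u IH] [|k] //= Hk; rewrite !big_cons.
  by rewrite [x + _]addrC addrK addrC.
by rewrite IH // !addrA.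
Qed.

Lemma argmax (g : nat -> int) m : exists k, (k <= m)%N /\ forall l, (l <= m)%N -> g l <= g k.
Proof.
elim: m => [|m [k [Hk Hl]]]; first by exists 0%N; split => // l; rewrite leqn0 => /eqP ->.
have [le|lt] := lerP (g m.+1) (g k).
  exists k; split; first lia.
  move=> l; rewrite leq_eqVlt => /orP[/eqP ->//|]; rewrite ltnS; exact: Hl.
exists m.+1; split => // l; rewrite leq_eqVlt => /orP[/eqP ->//|]; rewrite ltnS => /Hl.
move=> h; apply: (le_trans h); exact: ltW.
Qed.

Lemma shiftv_ok n m d k v : (1 < n)%N -> (k <= m)%N -> is_vertex n m v ->
  ((1 <= k)%N -> -1 <= crd v k + (if d then 1 else -1) <= 1) ->
  ((k < m)%N -> -1 <= crd v k.+1 - (if d then 1 else -1) <= 1) ->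
  is_vertex n m (shiftv n m d k v) /\ shf n m d k v (shiftv n m d k v).
Proof.
move=> Hn Hk [Hs H0 Hm1 Hin Hsum] Hc1 Hc2.
set s : int := if d then 1 else -1.
have Cw j : crd (shiftv n m d k v) j =
   if j == k.+1 then addc n m k.+1 (- s) (crd v k.+1)
   else if j == k then addc n m k s (crd v k) else crd v j.
  rewrite /shiftv /Defs.coord nth_set_nth /= nth_set_nth /=. by [].
have Hsh : shf n m d k v (shiftv n m d k v).
  split => //.
  - by move=> j /negbTE h1 /negbTE h2; rewrite Cw h1 h2.
  - by rewrite Cw (_ : (k == k.+1) = false) ?eqxx //; lia.
  - by rewrite Cw eqxx.
split => //.
have Hsz : size (shiftv n m d k v) = m.+2.
  rewrite /shiftv !size_set_nth Hs; lia.
split => //.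
- rewrite Cw /=; case: ifP => [/eqP h|_]; last exact: H0.
  subst k; apply: addc_range => //; lia.
- rewrite Cw; case: ifP => [/eqP h|_].
    have hk : k = m by lia.
    subst k; apply: addc_range => //; lia.
  case: ifP => [/eqP h|_]; last exact: Hm1.
  lia.
- move=> j Hj; rewrite Cw mem3.
  case: (j =P k.+1) => [h1|/eqP h1].
    subst j; rewrite ?eqxx addc_inner; try (apply/eqP; lia).
  rewrite ?(negbTE h1).
  case: (j =P k) => [h2|/eqP h2].
    subst j; rewrite ?eqxx addc_inner; try (apply/eqP; lia).
    try by rewrite /s; apply: Hc1; lia.
  by rewrite ?(negbTE h2) -mem3; apply: Hin.
- rewrite /shiftv sum_set_nth; last by rewrite size_set_nth Hs; lia.
  rewrite sum_set_nth; last by rewrite Hs; lia.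
  have E : forall y : int, nth 0 (set_nth 0 v k y) k.+1 = nth 0 v k.+1.
    by move=> y; rewrite nth_set_nth /= (_ : (k.+1 == k) = false) //; lia.
  rewrite E.
  have A := addc_dvd' n m k (if d then 1 else -1) (crd v k).
  have B := addc_dvd' n m k.+1 (- (if d then 1 else -1)) (crd v k.+1).
  have := rpredD Hsum (rpredD A B).
  rewrite /Defs.coord; congr (_ %| _)%Z; move: (\sum_(x <- v) x) => S0. move: (addc n m k (if d then 1 else -1) v`_k) => a1. move: (addc n m k.+1 (- (if d then 1 else -1)) v`_k.+1) => a2. move: (v`_k) (v`_k.+1) => x1 x2. move: (if d then 1 else -1) => s0. lia.
Qed.

Lemma absum_upd m (f : nat -> int) k y : (k <= m)%N ->
  (absum m (fun l => if l == k then y else f l) + `|f k|%N = absum m f + `|y|%N)%N.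
Proof.
move=> Hk; rewrite /absum (bigD1 (Ordinal (Hk : (k < m.+1)%N))) //=.
rewrite [X in _ = X + _](bigD1 (Ordinal (Hk : (k < m.+1)%N))) //= eqxx.
rewrite (eq_bigr (fun i : 'I_m.+1 => `|f i|%N)); first lia.
by move=> i /negbTE; rewrite -val_eqE /= => ->.
Qed.

Lemma absum0 m (f : nat -> int) : absum m f = 0%N -> forall k, (k <= m)%N -> f k = 0.
Proof.
move=> H k Hk; apply/eqP; rewrite -absz_eq0; apply/eqP.
move: H; rewrite /absum (bigD1 (Ordinal (Hk : (k < m.+1)%N))) //=; lia.
Qed.

Lemma zero_coord m k : crd (zero_vertex m) k = 0.
Proof. by rewrite /Defs.coord /zero_vertex nth_nseq; case: ifP. Qed.

Lemma realize n m : (1 < n)%N -> (1 <= m)%N -> forall N v f,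
  absum m f = N -> is_vertex n m v -> consf n m v f ->
  exists Q : seq (seq int),
    [/\ size Q = N.+1, nth [::] Q 0 = v, last v Q = zero_vertex m,
        (forall a, (a < size Q)%N -> is_vertex n m (nth [::] Q a)) &
        forall a, (a.+1 < size Q)%N -> exists d k,
          [/\ shf n m d k (nth [::] Q a) (nth [::] Q a.+1), f k != 0 & d = (0 < f k)]].
Proof.
move=> Hn Hm; elim=> [|N IH] v f HN Hv Hc.
  exists [:: v]; split => //; last by case=> //.
  have Hf := absum0 HN.
  case: Hv => Hs H0 Hm1 Hin _; case: Hc => Hc1 Hc2 Hc3.
  apply: (@eq_from_nth _ 0); first by rewrite size_nseq.
  move=> k; rewrite Hs => Hk; rewrite -/(crd v k) -/(crd (zero_vertex m) k) zero_coord.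
  have [->|k0] := eqVneq k 0%N.
    move: Hc2; rewrite Hf //; case/dvdzP => c Hcc.
    have [h|[h|h]] : (c <= -1) \/ (c = 0) \/ (1 <= c) by lia.
    - nia.
    - subst c; lia.
    - nia.
  have [->|km] := eqVneq k m.+1.
    move: Hc3; rewrite Hf //; case/dvdzP => c Hcc.
    have [h|[h|h]] : (c <= -1) \/ (c = 0) \/ (1 <= c) by lia.
    - nia.
    - subst c; lia.
    - nia.
  have := Hc1 k ltac:(lia); rewrite !Hf; lia.
have [kM [HkM HM]] := argmax f m.
have [km [Hkm Hmn]] := argmax (fun l => - f l) m.
have [k [d [Hk Hfk Hd Hnb]]] : exists k d, [/\ (k <= m)%N, f k != 0, d = (0 < f k) &
    forall l, (l <= m)%N -> if d then f l <= f k else f k <= f l].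
  have [pos|npos] := boolP (0 < f kM).
    by exists kM, true; split => //; lia.
  have [neg|nneg] := boolP (f km < 0).
    exists km, false; split => //; try lia.
    move=> l Hl; have := Hmn l Hl; lia.
  exfalso; have : absum m f = 0%N.
    rewrite /absum big1 // => [[l Hl]] _ /=.
    have := HM l ltac:(lia); have := Hmn l ltac:(lia); lia.
  by rewrite HN.
have Hks : (`|(f k - (if d then 1 else -1))%R|%N.+1 = `|f k|%N).
  by case: d Hd {Hnb} => Hd; lia.
set s : int := if d then 1 else -1.
set f' := fun l => if l == k then f k - s else f l.
have Habs : absum m f' = N.
  have := absum_upd f (f k - s) Hk; rewrite -/f' HN.
  move: Hks; rewrite -/s; lia.
case: Hv => Hs H0 Hm1 Hin Hsum.
case: Hc => Hc1 Hc2 Hc3.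
have Hv : is_vertex n m v by [].
have [Hv' Hsh] : is_vertex n m (shiftv n m d k v) /\ shf n m d k v (shiftv n m d k v).
  apply: shiftv_ok => //.
  - move=> k1; have := Hc1 k ltac:(lia); have := Hnb k.-1 ltac:(lia).
    have := Hin k ltac:(lia); rewrite mem3.
    destruct d => /=; lia.
  - move=> k1; have := Hc1 k.+1 ltac:(lia); have := Hnb k.+1 ltac:(lia).
    have := Hin k.+1 ltac:(lia); rewrite mem3 /=.
    destruct d => /=; lia.
have Hc' : consf n m (shiftv n m d k v) f'.
  case: Hsh => _ Ho Ck Ck1.
  split.
  - move=> l Hl; rewrite /f'.
    case: (l =P k) => [lk|/eqP lk].
      subst l; rewrite Ck addc_inner; try (apply/eqP; lia).
      rewrite (_ : (k.-1 == k) = false); last by lia.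
      have := Hc1 k Hl; rewrite /s; move: (if d then 1 else -1) => s0; lia.
    case: (l =P k.+1) => [lk1|/eqP lk1].
      subst l; rewrite Ck1 addc_inner; try (apply/eqP; lia).
      rewrite (_ : (k.+1.-1 == k) = true); last by lia.
      have := Hc1 k.+1 Hl; rewrite /s; move: (if d then 1 else -1) => s0; rewrite (_ : k.+1.-1 = k) //; lia.
    rewrite Ho // (_ : (l.-1 == k) = false); last by lia.
    exact: Hc1.
  - rewrite /f'; have [k0|k0] := eqVneq k 0%N.
      subst k; rewrite Ck /=.
      have := rpredD Hc2 (addc_dvd' n m 0 s (crd v 0)).
      congr (_ %| _)%Z; move: (addc n m 0 s (crd v 0)) => a; lia.
    rewrite Ho ?(negbTE k0) //; last by rewrite eq_sym.
  - rewrite /f'; have [km'|km'] := eqVneq m k.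
      subst k; rewrite Ck1 ?eqxx.
      have := rpredD Hc3 (addc_dvd' n m m.+1 (- s) (crd v m.+1)).
      congr (_ %| _)%Z; move: (addc n m m.+1 (- s) (crd v m.+1)) => a; lia.
    rewrite Ho ?(negbTE km') //; apply/eqP; lia.
have [Q' [HQ1 HQ2 HQ3 HQ4 HQ5]] := IH _ _ Habs Hv' Hc'.
case: Q' HQ1 HQ2 HQ3 HQ4 HQ5 => [//|v' Q''] HQ1 /= HQ2 HQ3 HQ4 HQ5.
subst v'.
exists [:: v, shiftv n m d k v & Q'']; split => //.
- by move: HQ1 => /= [->].
- by case=> [|a] Ha //; apply: (HQ4 a).
case=> [|a] Ha.
  by exists d, k; split.
have [d' [k' [Hs' Hf' Hd']]] := HQ5 a Ha.
have Key : f k' != 0 /\ (0 < f' k') = (0 < f k').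
  move: Hf'; rewrite /f'; case: (k' =P k) => [->|_] H; last by [].
  move: H; rewrite /s Hd; have [h|h] := boolP (0 < f k).
    by move=> /= Hx; split => //; lia.
  by move=> /= Hx; split => //; lia.
case: Key => K1 K2.
by exists d', k'; split => //; rewrite Hd' K2.
Qed.

Lemma sum_ind1 m i : (i <= m)%N -> (\sum_(k < m.+1) (i == k))%N = 1%N.
Proof.
move=> Hi; rewrite (bigD1 (Ordinal (Hi : (i < m.+1)%N))) //= eqxx big1 //.
by move=> k; rewrite -val_eqE /= eq_sym => /negbTE ->.
Qed.

Lemma cnt_sum m (S : seq (bool * nat)) : all (fun s => s.2 <= m)%N S ->
  (\sum_(k < m.+1) cnt S k)%N = size S.
Proof.
elim: S => [|[d i] S IH] /=; first by rewrite big1.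
case/andP => Hi HS.
rewrite /cnt.
rewrite (eq_bigr (fun k : 'I_m.+1 => (i == k) + cnt S k)%N).
  by rewrite big_split /= sum_ind1 // -/(cnt S) IH.
move=> k _; rewrite /cnt /= !xpair_eqE; case: d => /=; lia.
Qed.

Lemma abs_le_cnt S k : (`|flow S k|%N <= cnt S k)%N.
Proof. rewrite /flow /cnt; lia. Qed.

Lemma sum_eq_le (a b : nat -> nat) m : (forall k, b k <= a k)%N ->
  (\sum_(k < m.+1) a k <= \sum_(k < m.+1) b k)%N -> forall k, (k <= m)%N -> a k = b k.
Proof.
move=> Hba Hs k Hk; have Hk' : (k < m.+1)%N := Hk.
apply/eqP; rewrite eqn_leq Hba andbT; apply/negP => Hlt.
move: Hs; rewrite (bigD1 (Ordinal Hk')) //=.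
rewrite [X in (_ <= X)%N -> _](bigD1 (Ordinal Hk')) //=.
move=> H2; move: H2; apply/negP; rewrite -ltnNge -addSn; apply: leq_add; first lia.
by apply: leq_sum => i _; exact: Hba.
Qed.

Lemma step_sign S d k : `|flow S k|%N = cnt S k -> (d, k) \in S ->
  flow S k != 0 /\ d = (0 < flow S k).
Proof.
move=> He Hin.
have Hc : (0 < count_mem (d, k) S)%N.
  by rewrite lt0n; apply/negP => /eqP /count_memPn; rewrite Hin.
case: d Hin Hc => _ Hc.
  have h : 0 < flow S k. move: He Hc; rewrite /flow /cnt. move: (count_mem (true, k) S) => L. move: (count_mem (false,k) S) => R. lia.
  by rewrite h; split => //; lia.
have h : flow S k < 0. move: He Hc; rewrite /flow /cnt. move: (count_mem (true, k) S) => L. move: (count_mem (false,k) S) => R. lia.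
split; first lia.
by rewrite ltNge (ltW h).
Qed.

Lemma flow_mem S d k : flow S k != 0 -> d = (0 < flow S k) -> (d, k) \in S.
Proof.
move=> Hf Hd; apply/negPn/negP => /count_memPn H0; move: Hf Hd; rewrite /flow.
case: d H0 => H0; rewrite H0.
- move: (count_mem (false, k) S) => R Hf Hd.
  have : (0 < 0%N%:Z - R%:Z) by rewrite -Hd.
  lia.
- move: (count_mem (true, k) S) => L Hf Hd.
  have : ~~ (0 < L%:Z - 0%N%:Z) by rewrite -Hd.
  lia.
Qed.

Lemma mem_step n m (P : seq (seq int)) S d k :
  size S = (size P).-1 ->
  (forall a, (a < size S)%N -> shf n m (nth (true, 0%N) S a).1 (nth (true, 0%N) S a).2
                                     (nth [::] P a) (nth [::] P a.+1)) ->
  (d, k) \in S -> exists a, step_shift n m P a d k.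
Proof.
move=> Hsz HS Hin; exists (index (d, k) S).
have Hi : (index (d, k) S < size S)%N by rewrite index_mem.
split; first lia.
by have := HS _ Hi; rewrite nth_index.
Qed.

Lemma wall_transfer n m P Q p :
  (forall a d k, step_shift n m Q a d k -> exists a', step_shift n m P a' d k) ->
  is_wall n m P p -> is_wall n m Q p.
Proof.
move=> H; rewrite /is_wall; case: ifP => _.
  by move=> HP a HQ; have [a' Ha'] := H _ _ _ HQ; exact: HP a' Ha'.
case: ifP => _.
  by move=> HP a HQ; have [a' Ha'] := H _ _ _ HQ; exact: HP a' Ha'.
move=> [q [-> [Hq HP]]]; exists q; split => //; split => // a d HQ.
by have [a' Ha'] := H _ _ _ HQ; exact: HP a' d Ha'.
Qed.

Unset Implicit Arguments.

Theorem lemma5p11 (n m : nat) (v : seq int) (P : seq (seq int)) (lo hi : int)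
  (i j : nat) :
  (1 < n)%N -> (1 <= m)%N -> is_vertex n m v -> pivot_path n m v P ->
  P_interval n m P lo hi ->
  lo <= i%:Z -> i%:Z + 1 <= hi -> lo <= j%:Z -> j%:Z + 1 <= hi ->
  forall (a b : nat) (da db : bool),
    step_shift n m P a da i -> step_shift n m P b db j -> da = db.
Proof.
move=> Hn Hm Hv [p [Hp HP HwP Hmin]] [A [B [[Hlo Hhi] HA HB HAB Hno]]]
  Hi1 Hi2 Hj1 Hj2 a b da db Sa Sb.
case: (HP) => HP1 HP2 HP3 HP4 HP5.
have [S [Hsz HS]] := extract HP5.
have Hall : all (fun s => s.2 <= m)%N S.
  by apply/(all_nthP (true, 0%N)) => c Hc; case: (HS c Hc).
have Hcons : consf n m v (flow S).
  case: P HP1 HP2 HP3 HP4 HP5 Hsz HS {HP Hmin HwP Sa Sb Hno HA HB}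
    => [//|x P'] _ Hx Hlast _ _ Hsz HS.
  move: Hx Hlast => /= Hx Hlast; subst x.
  have [C1 C2 C3] := cons_path Hsz HS.
  rewrite Hlast in C1 C2 C3.
  split.
  - by move=> k Hk; have := C1 k Hk; rewrite zero_coord; lia.
  - by move: C2; rewrite -rpredN zero_coord; congr (_ %| _)%Z; lia.
  - by move: C3; rewrite -rpredN zero_coord; congr (_ %| _)%Z; lia.
have [Q [HQ1 HQ2 HQ3 HQ4 HQ5]] := realize Hn Hm (erefl (absum m (flow S))) Hv Hcons.
have HQpath : is_path_to0 n m v Q.
  split => //; first by rewrite HQ1.
  by move=> c Hc; have [d [k [Hs _ _]]] := HQ5 c Hc; exists d, k.
have Htr : forall c d k, step_shift n m Q c d k -> exists a', step_shift n m P a' d k.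
  move=> c d k [Hc Hsh].
  have [d' [k' [Hs' Hf Hd]]] := HQ5 c Hc.
  have [E1 E2] := shift_uniq Hn Hm (HQ4 c (ltnW Hc)) Hsh Hs'.
  subst d k.
  exact: (mem_step Hsz HS (flow_mem Hf Hd)).
have HwQ : is_wall n m Q p := wall_transfer Htr HwP.
have Hle := Hmin Q HQpath HwQ.
have Heq : forall k, (k <= m)%N -> cnt S k = `|flow S k|%N.
  have Hb : forall k, (`|flow S k|%N <= cnt S k)%N by move=> k; apply: abs_le_cnt.
  have Hs : (\sum_(k < m.+1) cnt S k <= \sum_(k < m.+1) `|flow S k|%N)%N.
    rewrite cnt_sum // -/(absum m (flow S)); lia.
  move=> k Hk; have := sum_eq_le Hb Hs Hk; by [].
have Hsgn : forall c d k, step_shift n m P c d k -> flow S k != 0 /\ d = (0 < flow S k).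
  move=> c d k [Hc Hsh].
  have Hc' : (c < size S)%N by lia.
  have [E1 E2] := shift_uniq Hn Hm (HP4 c (ltnW Hc)) Hsh (HS c Hc').
  have Hk : (k <= m)%N by case: Hsh.
  apply: step_sign; first by rewrite Heq.
  by rewrite E1 E2 -surjective_pairing; apply: mem_nth.
have Hhim : hi <= (m.+1)%:Z.
  rewrite Hhi; case: HB => [->//|[q [-> [Hq _]]]]; lia.
have HAm : -1 <= A.
  case: HA => [->//|[q [-> _]]]; lia.
have Hnz : forall q : nat, lo <= q%:Z -> q%:Z + 1 <= hi -> flow S q != 0.
  move=> q h1 h2; apply/negP => /eqP H0.
  have Hw : inner_wall n m P q.
    split; first lia.
    move=> c d Hst; have [h _] := Hsgn _ _ _ Hst; by rewrite H0 eqxx in h.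
  by apply: (Hno q Hw); lia.
have Hnb : forall q : nat, lo <= q%:Z -> q%:Z + 2 <= hi ->
    `|flow S q.+1 - flow S q| <= 1.
  move=> q h1 h2.
  case: Hcons => C1 _ _; have := C1 q.+1 ltac:(lia).
  case: Hv => _ _ _ Hin _; have := Hin q.+1 ltac:(lia); rewrite mem3 /=; lia.
have Hsame : forall x y : nat, (x <= y)%N -> lo <= x%:Z -> y%:Z + 1 <= hi ->
    ((0 < flow S x) <-> (0 < flow S y)).
  move=> x y Hxy hx hy.
  have H : forall t, (x + t <= y)%N -> ((0 < flow S (x + t)) <-> (0 < flow S x)).
    elim=> [|t IH] Ht; first by rewrite addn0.
    have := IH (ltnW (leq_trans (ltnSn _) (leq_trans _ Ht))).
    have := Hnz (x + t)%N ltac:(lia) ltac:(lia).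
    have := Hnz (x + t.+1)%N ltac:(lia) ltac:(lia).
    have := Hnb (x + t)%N ltac:(lia) ltac:(lia).
    rewrite addnS; lia.
  have := H (y - x)%N; rewrite subnKC // => /(_ (leqnn _)) [h1 h2].
  by split.
have [Hf1 Hd1] := Hsgn _ _ _ Sa.
have [Hf2 Hd2] := Hsgn _ _ _ Sb.
rewrite Hd1 Hd2.
have [hij|hji] := leqP i j.
  have [h1 h2] := Hsame i j hij Hi1 Hj2.
  by apply/idP/idP.
have [h1 h2] := Hsame j i (ltnW hji) Hj1 Hi2.
by apply/idP/idP.
Qed.
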